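(* Let $C$ be a nonzero linear code of length $n$ over $R$ with component codes $C_1,\dots,C_8$. Then $C$ is an MDS code over $R$ if and only if each $C_i$ ($1\le i\le 8$) is an MDS code over $\mathbb{Z}_4$ and all the $C_i$ have the same parameters (same cardinality and same minimum Hamming distance).
   Context: $R=\mathbb{Z}_4[u,v,w]/\langle u^2-u,v^2-v,w^2-w\rangle$, with idempotents $\eta_1=(1-u)(1-v)(1-w)$, $\eta_2=u(1-v)(1-w)$, $\eta_3=(1-u)v(1-w)$, $\eta_4=(1-u)(1-v)w$, $\eta_5=uv(1-w)$, $\eta_6=u(1-v)w$, $\eta_7=(1-u)vw$, $\eta_8=uvw$; every $\mathbf{x}\in R^n$ is uniquely $\sum_{i=1}^8\mathbf{x}_i\eta_i$ with $\mathbf{x}_i\in\mathbb{Z}_4^n$. A linear code over $R$ is an $R$-submodule of $R^n$; its component codes are $C_i=\{\mathbf{x}_i:\ \mathbf{x}\in C\}\subseteq\mathbb{Z}_4^n$. $d_H$ denotes minimum Hamming distance. A code $D$ of length $n$ over a finite ring $S$ is MDS if $d_H(D)=n-\log_{|S|}|D|+1$; here $|R|=4^8$. *)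

(* Defs.v *)
From HB Require Import structures.
From mathcomp Require Import all_boot all_order all_algebra.
Set Implicit Arguments. Unset Strict Implicit. Unset Printing Implicit Defensive.
Import GRing.Theory.
Local Open Scope ring_scope.

(* Monomials of Z4[u,v,w]/<u^2-u,v^2-v,w^2-w> are u_A = prod_{j in A} u_j,
   A a subset of {0,1,2} (0 = u, 1 = v, 2 = w).  An element of R is its
   coefficient vector in this Z4-basis. *)
Definition idx := {set 'I_3}.
Definition R := {ffun idx -> 'Z_4}.

(* u_A * u_B = u_(A :|: B) since u_j^2 = u_j *)
Definition mulR (x y : R) : R :=
  [ffun S => \sum_(A : idx) \sum_(B : idx | A :|: B == S) x A * y B].
Definition cR (c : 'Z_4) : R := [ffun S => if S == set0 then c else 0].
Definition oneR : R := cR 1.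
Definition uR (j : 'I_3) : R := [ffun S => if S == [set j] then 1 else 0].

(* Primitive idempotents: eta_T = prod_{j in T} u_j * prod_{j notin T} (1 - u_j).
   E.g. T = set0 gives eta_1 = (1-u)(1-v)(1-w), T = [set 0] gives eta_2, ...,
   T = setT gives eta_8 = uvw. *)
Definition eta (T : idx) : R :=
  \big[mulR/oneR]_(j < 3) (if j \in T then uR j else oneR - uR j).

Definition vecR n := {ffun 'I_n -> R}.
Definition vecZ n := {ffun 'I_n -> 'Z_4}.

Definition smul n (r : R) (x : vecR n) : vecR n := [ffun i => mulR r (x i)].

Definition linear_code n (C : {set vecR n}) : Prop :=
  [/\ (0 : vecR n) \in C,
      {in C &, forall x y, x + y \in C} &
      forall r : R, {in C, forall x, smul r x \in C}].

Definition decomp n (y : {ffun idx -> vecZ n}) : vecR n :=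
  [ffun i => \sum_(T : idx) mulR (cR (y T i)) (eta T)].

Definition component n (x : vecR n) (T : idx) : vecZ n :=
  odflt 0 (omap (fun y : {ffun idx -> vecZ n} => y T) [pick y | decomp y == x]).

Definition comp_code n (C : {set vecR n}) (T : idx) : {set vecZ n} :=
  [set component x T | x in C].

(* Hamming distance and minimum Hamming distance (n.+1 for codes with < 2 words) *)
Definition hdist (A : finType) n (x y : {ffun 'I_n -> A}) : nat :=
  #|[set i | x i != y i]|.
Definition dmin (A : finType) n (D : {set {ffun 'I_n -> A}}) : nat :=
  \big[minn/n.+1]_(x in D) \big[minn/n.+1]_(y in D | y != x) hdist x y.

(* MDS: d_H(D) = n - log_{|A|} |D| + 1, i.e. |D| = |A|^(n - d_H(D) + 1) *)
Definition MDS (A : finType) n (D : {set {ffun 'I_n -> A}}) : Prop :=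
  #|D| = (#|A| ^ (n.+1 - dmin D))%N /\ (dmin D <= n.+1)%N.

(* Main.v *)
Require Import Defs.
From mathcomp Require Import all_boot all_order all_algebra zify.
Set Implicit Arguments. Unset Strict Implicit. Unset Printing Implicit Defensive.
Import GRing.Theory.
Local Open Scope ring_scope.

Definition ev (x : R) (S : idx) : 'Z_4 := \sum_(A : idx | A \subset S) x A.

Lemma evD x y S : ev (x + y) S = ev x S + ev y S.
Proof. by rewrite /ev -big_split /=; apply: eq_bigr => A _; rewrite !ffunE. Qed.

Lemma ev0 S : ev 0 S = 0.
Proof. by rewrite /ev big1 // => A _; rewrite ffunE. Qed.

Lemma evN x S : ev (- x) S = - ev x S.
Proof. by rewrite /ev -sumrN; apply: eq_bigr => A _; rewrite !ffunE. Qed.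

Lemma ev_sum (I : finType) (F : I -> R) S : ev (\sum_i F i) S = \sum_i ev (F i) S.
Proof. exact: (big_morph (ev^~ S) (fun x y => evD x y S) (ev0 S)). Qed.

Lemma evC c S : ev (cR c) S = c.
Proof.
rewrite /ev (bigD1 set0) ?sub0set //= big1 ?addr0 ?ffunE ?eqxx //.
by move=> A /andP[_ /negbTE]; rewrite ffunE => ->.
Qed.

Lemma evU j S : ev (uR j) S = (j \in S)%:R.
Proof.
case: (boolP (j \in S)) => jS.
  rewrite /ev (bigD1 [set j]) ?sub1set //= big1 ?addr0 ?ffunE ?eqxx //.
  by move=> A /andP[_ /negbTE]; rewrite ffunE => ->.
rewrite /ev big1 // => A AS; rewrite ffunE; case: eqP => // Aj.
by move: AS; rewrite Aj sub1set (negbTE jS).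
Qed.

Lemma evM x y S : ev (mulR x y) S = ev x S * ev y S.
Proof.
rewrite /ev /mulR.
transitivity (\sum_(A : idx) \sum_(B : idx) if (A :|: B \subset S) then x A * y B else 0).
  under eq_bigr do rewrite ffunE.
  rewrite exchange_big /=; apply: eq_bigr => A _.
  under eq_bigr do rewrite big_mkcond /=.
  rewrite exchange_big /=; apply: eq_bigr => B _.
  rewrite -big_mkcondr /=.
  case: ifP => ABS.
    by rewrite (big_pred1 (A :|: B)) // => C /=; rewrite [A :|: B == C]eq_sym; case: eqP => [->|]; rewrite ?ABS ?andbF.
  by rewrite big_pred0 // => C; case: eqP => [<-|]; rewrite ?ABS ?andbF.
rewrite big_distrl /= [RHS]big_mkcond /=; apply: eq_bigr => A _.
case AS: (A \subset S); last by rewrite big1 // => B _; rewrite subUset AS.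
rewrite big_distrr /= [RHS]big_mkcond /=; apply: eq_bigr => B _.
by rewrite subUset AS.
Qed.

Lemma ev1 S : ev oneR S = 1.
Proof. exact: evC. Qed.

Lemma ev_eta T S : ev (eta T) S = (T == S)%:R.
Proof.
rewrite /eta (big_morph (ev^~ S) (fun x y => evM x y S) (ev1 S)).
have E j : ev (if j \in T then uR j else oneR - uR j) S = ((j \in T) == (j \in S))%:R.
  case: (j \in T); rewrite ?evU ?evD ?evN ?ev1 ?evU; case: (j \in S) => //=.
  by rewrite subrr.
  by rewrite subr0.
under eq_bigr do rewrite E.
case: (T =P S) => [<-|/eqP TS].
  by rewrite big1 // => j _; rewrite eqxx.
have [j Hj] : exists j, (j \in T) != (j \in S).
  apply/existsP; apply: contraR TS; rewrite negb_exists => /forallP H.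
  by apply/eqP/setP => j; move: (H j); rewrite negbK => /eqP.
by rewrite (bigD1 j) //= (negbTE Hj) mul0r.
Qed.

Lemma ev_inj x y : (forall S, ev x S = ev y S) -> x = y.
Proof.
move=> H; apply/ffunP.
suff K : forall m (A : idx), (#|A| < m)%N -> x A = y A by move=> A; apply: (K _ A).
elim=> // m IH A Am.
have := H A; rewrite /ev (bigD1 A) //= [in RHS](bigD1 A) //=.
rewrite (eq_bigr (fun B => y B)); first by move/addIr.
move=> B /andP[BA BnA]; apply: IH.
have : B \proper A by rewrite properEneq BnA BA.
by move/proper_card => lt; apply: leq_trans lt _.
Qed.

Definition Phi n (x : vecR n) : {ffun idx -> vecZ n} := [ffun T => [ffun i => ev (x i) T]].

Lemma ev_decomp n (y : {ffun idx -> vecZ n}) i S : ev (decomp y i) S = y S i.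
Proof.
rewrite ffunE ev_sum.
under eq_bigr do rewrite evM evC ev_eta mulr_natr mulrb.
by rewrite -big_mkcond big_pred1_eq.
Qed.

Lemma decomp_Phi n (x : vecR n) : decomp (Phi x) = x.
Proof.
by apply/ffunP => i; apply: ev_inj => S; rewrite ev_decomp !ffunE.
Qed.

Lemma componentE n (x : vecR n) T : component x T = Phi x T.
Proof.
rewrite /component; case: pickP.
  move=> y /eqP Hy /=; apply/ffunP => i; rewrite -Hy !ffunE.
  by have := ev_decomp y i T; rewrite ffunE => ->.
by move=> H; move: (H (Phi x)); rewrite /= decomp_Phi eqxx.
Qed.

Lemma Phi_inj n : injective (@Phi n).
Proof.
move=> x y E; apply/ffunP => i; apply: ev_inj => S.
by move: (congr1 (fun f : {ffun idx -> vecZ n} => f S i) E); rewrite !ffunE.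
Qed.

Lemma Phi_smul n r (x : vecR n) S i : Phi (smul r x) S i = ev r S * Phi x S i.
Proof. by rewrite !ffunE evM. Qed.

Lemma comp_codeE n (C : {set vecR n}) T : comp_code C T = [set Phi x T | x in C].
Proof. by apply: eq_imset => x; rewrite componentE. Qed.

Section D.
Variables (A : finType) (n : nat).
Implicit Types (D : {set {ffun 'I_n -> A}}) (x y : {ffun 'I_n -> A}).

Lemma dmin_le D : (dmin D <= n.+1)%N.
Proof.
rewrite /dmin; elim/big_rec: _ => // i v _ h; by rewrite geq_min h orbT.
Qed.

Lemma bigmin_ub (I : finType) (P : pred I) (F : I -> nat) m i :
  P i -> (\big[minn/m]_(j | P j) F j <= F i)%N.
Proof.
move=> Pi; have : i \in index_enum I by rewrite mem_index_enum.
elim: (index_enum I) => //= j r IH; rewrite inE big_cons => /orP[/eqP<- | ir].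
  by rewrite Pi geq_min leqnn.
by case: ifP => _; rewrite ?geq_min IH ?orbT.
Qed.

Lemma dmin_ub D x y : x \in D -> y \in D -> y != x -> (dmin D <= hdist x y)%N.
Proof.
move=> xD yD yx; rewrite /dmin; apply: leq_trans (bigmin_ub _ _ xD) _.
by apply: bigmin_ub; rewrite yD.
Qed.

Lemma dmin_lb D m : (forall x y, x \in D -> y \in D -> y != x -> m <= hdist x y)%N ->
  (m <= n.+1)%N -> (m <= dmin D)%N.
Proof.
move=> H mn; rewrite /dmin; elim/big_ind: _ => //; first by move=> a b ? ?; rewrite leq_min; apply/andP.
move=> x xD; elim/big_ind: _ => //; first by move=> a b ? ?; rewrite leq_min; apply/andP.
by move=> y /andP[yD yx]; apply: H.
Qed.

Lemma card_geq k : (k <= n)%N -> #|[set i : 'I_n | (k <= i)%N]| = (n - k)%N.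
Proof.
move=> kn; rewrite cardsE -sum1_card (eq_bigl (fun i : 'I_n => (k <= i)%N)) //.
rewrite -(big_mkord (fun i => (k <= i)%N) (fun _ => 1%N)) (@big_cat_nat _ _ _ k 0 n _ _ (leq0n k) kn) /=.
rewrite big_nat_cond big1 ?add0n; last by move=> i /andP[/andP[_ ik] ki]; move: ki; rewrite leqNgt ik.
rewrite big_nat_cond (eq_bigl (fun i => (k <= i < n)%N && true)); last first.
  by move=> i /=; rewrite andbT; case: (k <= i)%N; rewrite ?andbT ?andbF.
by rewrite -big_nat_cond sum_nat_const_nat muln1.
Qed.

Lemma singleton D : (#|D| <= #|A| ^ (n.+1 - dmin D))%N.
Proof.
have d1 : (1 <= dmin D)%N.
  apply: dmin_lb => // x y _ _ yx; rewrite card_gt0; apply/set0Pn.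
  have [i Hi] : exists i, x i != y i.
    by apply/existsP; apply: contraR yx; rewrite negb_exists => /forallP H; apply/eqP/ffunP => i; move: (H i); rewrite negbK => /eqP.
  by exists i; rewrite inE.
have := dmin_le D; rewrite leq_eqVlt => /orP[/eqP dE | dn].
  rewrite dE subnn expn0 leqNgt; apply/negP => /card_gt1P [x [y [xD yD xy]]].
  have := dmin_ub xD yD; rewrite eq_sym xy => /(_ isT).
  have := max_card [set i | x i != y i]; rewrite card_ord /hdist => h1 h2.
  by have := leq_trans h2 h1; rewrite dE ltnn.
have kn : (n.+1 - dmin D <= n)%N by rewrite leq_subLR -add1n leq_add2r.
pose f x := [ffun i : 'I_(n.+1 - dmin D) => x (widen_ord kn i)].
have := @leq_card_in _ _ f D; rewrite card_ffun card_ord; apply.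
move=> x y xD yD fxy; apply/eqP; apply: contraT => xy.
have := dmin_ub xD yD ltac:(by rewrite eq_sym).
have : (hdist x y <= n - (n.+1 - dmin D))%N.
  rewrite -card_geq //; apply: subset_leq_card; apply/subsetP => i; rewrite !inE.
  apply: contraR; rewrite -ltnNge => ik.
  have := congr1 (fun g : {ffun _ -> A} => g (Ordinal ik)) fxy; rewrite !ffunE /=.
  have -> : widen_ord kn (Ordinal ik) = i by apply: val_inj.
  by move=> ->.
move=> h1 h2; have := leq_trans h2 h1.
rewrite subnBA ?(ltnW dn) //. 
move: d1; clear; lia.
Qed.
End D.

Lemma card_Z4 : #|'Z_4| = 4%N.
Proof. by rewrite card_ord. Qed.

Lemma card_idx : #|idx| = 8%N.
Proof. by rewrite -cardsT -powersetT card_powerset cardsT card_ord. Qed.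

Lemma card_R : #|R| = (4 ^ 8)%N.
Proof. by rewrite card_ffun card_Z4 card_idx. Qed.

Lemma neq_ev (u v : R) : (u != v) = [exists S, ev u S != ev v S].
Proof.
apply/idP/existsP => [uv | [S]]; last by apply: contra => /eqP ->.
apply/existsP; apply: contraR uv; rewrite negb_exists => /forallP H.
by apply/eqP/ev_inj => S; move: (H S); rewrite negbK => /eqP.
Qed.

Section Main.
Variables (n : nat) (C : {set vecR n}).
Hypothesis lin : linear_code C.

Lemma Phi_smul_eta T (x : vecR n) S i : Phi (smul (eta T) x) S i = ((T == S)%:R * Phi x S i)%R.
Proof. by rewrite Phi_smul ev_eta. Qed.

Lemma ev_smul_eta T (u : R) S : ev (mulR (eta T) u) S = ((T == S)%:R * ev u S)%R.
Proof. by rewrite evM ev_eta. Qed.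

Lemma F1 T : (dmin C <= dmin (comp_code C T))%N.
Proof.
case: lin => C0 Cadd Csmul.
apply: dmin_lb; last exact: dmin_le.
move=> a b; rewrite comp_codeE => /imsetP[x xC ->] /imsetP[y yC ->] ba.
set x' := smul (eta T) x; set y' := smul (eta T) y.
have E : hdist x' y' = hdist (Phi x T) (Phi y T).
  rewrite /hdist; apply: eq_card => i; rewrite !inE neq_ev.
  rewrite /x' /y' !ffunE; apply/existsP/idP => [[S] | H]; last first.
    by exists T; rewrite !ev_smul_eta eqxx !mul1r.
  by rewrite !ev_smul_eta; case: (T =P S) => [<-|]; rewrite ?mul1r ?mul0r ?eqxx.
rewrite -E; apply: dmin_ub; rewrite ?Csmul //.
apply: contra ba => /eqP e; apply/eqP/ffunP => i.
by have := congr1 (fun z : vecR n => Phi z T i) e; rewrite /= !Phi_smul_eta eqxx !mul1r.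
Qed.

Lemma F2 e : (forall T, e <= dmin (comp_code C T))%N -> (e <= n.+1)%N -> (e <= dmin C)%N.
Proof.
move=> H en; apply: dmin_lb => // x y xC yC yx.
have [T HT] : exists T, Phi x T != Phi y T.
  apply/existsP; apply: contraR yx; rewrite negb_exists => /forallP K.
  apply/eqP/esym/Phi_inj/ffunP => T; by move: (K T); rewrite negbK => /eqP.
apply: leq_trans (H T) _.
have h : (dmin (comp_code C T) <= hdist (Phi x T) (Phi y T))%N.
  by apply: dmin_ub; [rewrite comp_codeE; apply/imsetP; exists x | rewrite comp_codeE; apply/imsetP; exists y | rewrite eq_sym].
apply: leq_trans h _.
rewrite /hdist; apply: subset_leq_card; apply/subsetP => i; rewrite !inE.
by apply: contra => /eqP e'; rewrite !ffunE e'.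
Qed.

Lemma C_sum (g : idx -> vecR n) : (forall T, g T \in C) -> \sum_T g T \in C.
Proof.
case: lin => C0 Cadd _ Hg; elim/big_ind: _ => // a b aC bC; exact: Cadd.
Qed.

Lemma F3 : #|C| = (\prod_T #|comp_code C T|)%N.
Proof.
case: lin => C0 Cadd Csmul.
rewrite -(card_imset _ (@Phi_inj n)).
have -> : (@Phi n) @: C = [set y : {ffun idx -> vecZ n} | [forall T, y T \in comp_code C T]].
  apply/setP => y; rewrite inE; apply/imsetP/forallP => [[x xC ->] T | H].
    by rewrite comp_codeE; apply/imsetP; exists x.
  have : forall T, exists x, (x \in C) && (Phi x T == y T).
    move=> T; move: (H T); rewrite comp_codeE => /imsetP[x xC ->].
    by exists x; rewrite xC eqxx.
  case/fin_all_exists => g Hg.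
  exists (\sum_T smul (eta T) (g T)).
    by apply: C_sum => T; apply: Csmul; case/andP: (Hg T).
  apply/ffunP => S; apply/ffunP => i.
  case/andP: (Hg S) => _ /eqP <-.
  rewrite !ffunE sum_ffunE ev_sum.
  under eq_bigr do rewrite ffunE ev_smul_eta mulr_natl mulrb.
  by rewrite -big_mkcond (big_pred1 S) // => T; rewrite /= eq_sym.
rewrite cardsE (eq_card (B := family (fun T => fun z => z \in comp_code C T))); last first.
  by move=> y; rewrite !inE; apply/forallP/familyP.
by rewrite card_family foldrE big_image.
Qed.
End Main.

Local Open Scope nat_scope.

Lemma prod_eq (I : finType) (f g : I -> nat) : (forall i, f i <= g i) ->
  (forall i, 0 < g i) -> \prod_i f i = \prod_i g i -> forall i, f i = g i.
Proof.
move=> le pos E i; apply/eqP; rewrite eqn_leq le /= leqNgt; apply/negP => lt.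
move: E; rewrite (bigD1 i) //= [in RHS](bigD1 i) //= => E.
have : f i * \prod_(j | j != i) f j < g i * \prod_(j | j != i) g j.
  have h1 : \prod_(j | j != i) f j <= \prod_(j | j != i) g j by apply: leq_prod => j _; apply: le.
  apply: (@leq_ltn_trans (f i * \prod_(j | j != i) g j)); first by rewrite leq_mul2l h1 orbT.
  by rewrite ltn_pmul2r // prodn_gt0.
by rewrite E ltnn.
Qed.

Theorem mainTheorem3 (n : nat) (C : {set vecR n}) :
  linear_code C -> C != [set (0 : vecR n)%R] ->
  (MDS C <->
   ((forall T : idx, MDS (comp_code C T)) /\
    (forall T T' : idx, #|comp_code C T| = #|comp_code C T'| /\
                        dmin (comp_code C T) = dmin (comp_code C T')))).
Proof.
move=> lin _.
have HF1 := F1 lin; have HF2 := @F2 n C; have HF3 := F3 lin.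
have Sg T : #|comp_code C T| <= 4 ^ (n.+1 - dmin (comp_code C T)).
  by have := singleton (comp_code C T); rewrite card_Z4.
rewrite /MDS card_R card_Z4; split.
  case=> HC _.
  have key : forall T, #|comp_code C T| = 4 ^ (n.+1 - dmin C).
    apply: prod_eq => [T | T | ].
    - apply: leq_trans (Sg T) _; apply: leq_pexp2l => //.
      by apply: leq_sub2l; apply: HF1.
    - by rewrite expn_gt0.
    - by rewrite -HF3 HC prod_nat_const card_idx expnAC.
  have dE T : dmin (comp_code C T) = dmin C.
    have h1 := Sg T; have h2 : 4 ^ (n.+1 - dmin C) <= 4 ^ (n.+1 - dmin (comp_code C T)) by rewrite -(key T).
    have h3 : 4 ^ (n.+1 - dmin (comp_code C T)) <= 4 ^ (n.+1 - dmin C).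
      by apply: leq_pexp2l => //; apply: leq_sub2l; apply: HF1.
    have /eqP : 4 ^ (n.+1 - dmin (comp_code C T)) = 4 ^ (n.+1 - dmin C) by apply/eqP; rewrite eqn_leq h2 h3.
    rewrite eqn_exp2l // => /eqP.
    have := dmin_le C; have := dmin_le (comp_code C T); have := HF1 T; lia.
  split => [T | T T']; first by rewrite key dE; split => //; apply: dmin_le.
  by rewrite !key !dE.
case=> Hm Hs.
set e := dmin (comp_code C set0).
have dE T : dmin (comp_code C T) = e by case: (Hs T set0).
have dC : dmin C = e.
  apply/eqP; rewrite eqn_leq; apply/andP; split; first by rewrite -(dE set0); apply: HF1.
  by apply: HF2 => [T|]; rewrite ?dE // /e dmin_le.
split; last exact: dmin_le.
rewrite HF3 dC (eq_bigr (fun _ => 4 ^ (n.+1 - e))); last first.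
  by move=> T _; case: (Hm T) => -> _; rewrite dE.
by rewrite prod_nat_const card_idx expnAC.
Qed.
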